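(* Let $\mathbf A$ be a finite subdirectly irreducible cBCK-algebra, let $\mathcal K$ be a cover of $\mathcal V(\mathbf A)$ in the lattice of varieties of cBCK-algebras, and let $\mathbf B$ be a subdirectly irreducible member of $\mathcal K$. Then $\mathrm{h}(\mathbf B)\le \mathrm{h}(\mathbf A)+1$.
   Context: A BCK-algebra is an algebra $(A,\ominus,0)$ of type $(2,0)$ satisfying $((x\ominus y)\ominus(x\ominus z))\ominus(z\ominus y)=0$, $x\ominus 0=x$, $0\ominus x=0$, and ($x\ominus y=0$ and $y\ominus x=0$ imply $x=y$); it is ordered by $x\le y$ iff $x\ominus y=0$. A cBCK-algebra is a BCK-algebra satisfying $x\ominus(x\ominus y)=y\ominus(y\ominus x)$; cBCK-algebras form a variety. For an element $a$, $\mathrm{h}(a)=|[0,a]|-1$ (possibly infinite), and $\mathrm{h}(\mathbf B)=\sup\{\mathrm{h}(b)\mid b\in B\}$. $\mathcal V(\mathbf A)$ is the variety generated by $\mathbf A$. A cover of a variety $\mathcal V$ is a variety $\mathcal K\supsetneq\mathcal V$ such that no variety lies strictly between $\mathcal V$ and $\mathcal K$. *)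

(* Defs.v *)
From mathcomp Require Import all_boot.
From Stdlib Require Import List.
Set Implicit Arguments. Unset Strict Implicit. Unset Printing Implicit Defensive.

Record alg : Type := Alg { car :> Type; sub : car -> car -> car; zero : car }.

Definition le (B : alg) (x y : B) : Prop := sub x y = zero B.

Definition is_BCK (B : alg) : Prop :=
  (forall x y z : B, sub (sub (sub x y) (sub x z)) (sub z y) = zero B) /\
  (forall x : B, sub x (zero B) = x) /\
  (forall x : B, sub (zero B) x = zero B) /\
  (forall x y : B, sub x y = zero B -> sub y x = zero B -> x = y).

Definition is_cBCK (B : alg) : Prop :=
  is_BCK B /\ (forall x y : B, sub x (sub x y) = sub y (sub y x)).

Inductive term : Type := Var of nat | TZero | TSub of term & term.

Fixpoint eval (B : alg) (v : nat -> B) (t : term) : B :=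
  match t with
  | Var n => v n
  | TZero => zero B
  | TSub t1 t2 => sub (eval v t1) (eval v t2)
  end.

Definition identity := (term * term)%type.

Definition sat (B : alg) (e : identity) : Prop :=
  forall v : nat -> B, eval v e.1 = eval v e.2.

(* Varieties are equational classes Mod(Σ). *)
Definition Mod (S : identity -> Prop) (B : alg) : Prop := forall e, S e -> sat B e.

Definition Id (A : alg) : identity -> Prop := fun e => sat A e.
Definition V (A : alg) : alg -> Prop := Mod (Id A).

Definition class_incl (K L : alg -> Prop) : Prop := forall B, K B -> L B.
Definition class_eq (K L : alg -> Prop) : Prop := forall B, K B <-> L B.

Definition cBCK_variety (S : identity -> Prop) : Prop :=
  forall B, Mod S B -> is_cBCK B.

Definition is_cover_of_VA (A : alg) (S : identity -> Prop) : Prop :=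
  cBCK_variety S /\
  class_incl (V A) (Mod S) /\ ~ class_incl (Mod S) (V A) /\
  (forall S' : identity -> Prop,
     class_incl (V A) (Mod S') -> class_incl (Mod S') (Mod S) ->
     class_eq (Mod S') (V A) \/ class_eq (Mod S') (Mod S)).

Definition congruence (B : alg) (th : B -> B -> Prop) : Prop :=
  (forall x, th x x) /\ (forall x y, th x y -> th y x) /\
  (forall x y z, th x y -> th y z -> th x z) /\
  (forall x1 y1 x2 y2, th x1 y1 -> th x2 y2 -> th (sub x1 x2) (sub y1 y2)).

(* B is SI: there is a pair a <> b lying in every nontrivial congruence
   (i.e. the intersection of all non-identity congruences is non-identity). *)
Definition subdirectly_irreducible (B : alg) : Prop :=
  exists a b : B, a <> b /\
    forall th, congruence th -> (exists x y : B, x <> y /\ th x y) -> th a b.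

Definition fin_alg (T : finType) (op : T -> T -> T) (z : T) : alg := @Alg T op z.

Definition h_fin (T : finType) (op : T -> T -> T) (z : T) (a : T) : nat :=
  #|[pred x : T | (op z x == z) && (op x a == z)]|.-1.

Definition h_fin_alg (T : finType) (op : T -> T -> T) (z : T) : nat :=
  \max_(a : T) h_fin op z a.

(* h(B) <= n, for arbitrary B: every element b has |[0,b]| <= n+1, i.e. every
   duplicate-free list of elements of [0,b] has length <= n+1. *)
Definition height_le (B : alg) (n : nat) : Prop :=
  forall (b : B) (s : list B), List.NoDup s ->
    (forall x, List.In x s -> le (zero B) x /\ le x b) -> length s <= n.+1.

(* Main.v *)
Require Import Defs.
From mathcomp Require Import all_boot.
From Stdlib Require Import Classical PeanoNat.
Set Implicit Arguments. Unset Strict Implicit.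

Section CBCK.
Variable B : alg.
Hypothesis HB : is_cBCK B.
Local Notation "x -- y" := (@Defs.sub B x y) (at level 50, left associativity).
Local Notation o := (zero B).
Local Notation "x <: y" := (x -- y = o) (at level 70).

Lemma A1 (x y z : B) : ((x--y)--(x--z))--(z--y) = o.
Proof. by case: HB => [[h _] _]; apply h. Qed.
Lemma A2 (x : B) : x -- o = x.
Proof. by case: HB => [[_ [h _]] _]; apply h. Qed.
Lemma A3 (x : B) : o -- x = o.
Proof. by case: HB => [[_ [_ [h _]]] _]; apply h. Qed.
Lemma A4 (x y : B) : x <: y -> y <: x -> x = y.
Proof. by case: HB => [[_ [_ [_ h]]] _]; apply h. Qed.
Lemma Cm (x y : B) : x -- (x -- y) = y -- (y -- x).
Proof. by case: HB => [_ h]; apply h. Qed.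

Lemma L0 (x : B) : x -- x = o.
Proof. have := A1 x o o. by rewrite ?A2 ?A3 ?A2. Qed.
Lemma L1 (x y : B) : (x -- y) -- x = o.
Proof. have := A1 x y o. by rewrite ?A2 ?A3 ?A2. Qed.
Lemma L2 (x y : B) : (x -- (x -- y)) -- y = o.
Proof. have := A1 x o y. by rewrite !A2. Qed.
Lemma ltr (x y z : B) : x <: y -> y <: z -> x <: z.
Proof. move=> h1 h2. have := A1 x z y. by rewrite h1 h2 !A2. Qed.
Lemma antiR (x y z : B) : x <: y -> (z -- y) <: (z -- x).
Proof. move=> h. have := A1 z y x. by rewrite h A2. Qed.
Lemma exch_le (x y z : B) : ((x -- y) -- z) <: ((x -- z) -- y).
Proof.
apply: (ltr (y := (x -- y) -- (x -- (x -- z)))).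
  by apply: antiR; apply: L2.
exact: A1.
Qed.
Lemma exch (x y z : B) : (x -- y) -- z = (x -- z) -- y.
Proof. apply: A4; exact: exch_le. Qed.
Lemma monoL (x y z : B) : x <: y -> (x -- z) <: (y -- z).
Proof. move=> h. have := A1 x z y. by rewrite h A2. Qed.
Lemma I1 (x y z : B) : ((x -- z) -- (y -- z)) <: (x -- y).
Proof. rewrite exch. exact: A1. Qed.
Lemma Lc (x y : B) : y <: x -> x -- (x -- y) = y.
Proof. move=> h. by rewrite Cm h A2. Qed.
Lemma le0 (x : B) : o <: x.
Proof. exact: A3. Qed.
Lemma lrefl (x : B) : x <: x.
Proof. exact: L0. Qed.
Lemma glb (c x y : B) : c <: x -> c <: y -> c <: (x -- (x -- y)).
Proof.
move=> hx hy. have h1 := antiR x hy. have h2 := antiR x h1.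
by rewrite Lc in h2.
Qed.

Lemma SUBT (t u v : B) : t <: u -> u <: v -> (v -- t) -- (u -- t) = v -- u.
Proof.
move=> htu huv. rewrite -{1}(Lc huv) (exch v (v -- u) t) Cm.
by rewrite (antiR v htu) A2.
Qed.
Lemma CANC (t u v : B) : t <: u -> u <: v -> u -- t = v -- t -> u = v.
Proof.
move=> htu huv e. apply: A4 => //. rewrite -(SUBT htu huv) e. exact: L0.
Qed.
Lemma ASSOC (T a b c : B) : a <: T -> a -- (T -- ((T -- b) -- c)) = (a -- b) -- c.
Proof.
move=> ha. set Z := (T -- b) -- c.
have hZ : Z <: T by apply: (ltr (y := T -- b)); [exact: L1 | exact: L1].
rewrite -{1}(Lc ha) exch (Lc hZ) /Z.
by rewrite (exch (T -- b)) (exch T) (Lc ha).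
Qed.
Lemma SUBT2 (T u x y : B) : u <: x -> x <: T -> y <: T ->
  (y -- u) -- (x -- u) = y -- x.
Proof.
move=> hux hxT hyT. rewrite -(ASSOC _ _ hyT) (SUBT hux hxT) (Lc hxT). done.
Qed.
Lemma ORTH (T p q : B) : p <: T -> q <: T ->
  (p -- q) -- ((p -- q) -- (q -- p)) = o.
Proof.
move=> hp hq. set g := p -- q. set h := q -- p. set c := g -- (g -- h).
have cg : c <: g by exact: L1.
have ch : c <: h by rewrite /c Cm; exact: L1.
have cp : c <: p by apply: (ltr cg); exact: L1.
have cq : c <: q by apply: (ltr ch); exact: L1.
set m := q -- (q -- p).
have cm : c <: m by exact: glb.
have m1 : m <: p -- c by rewrite /m -Cm; exact: antiR.
have m2 : m <: q -- c by exact: antiR.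
have m3 : m <: m -- c.
  have := glb m2 m1. by rewrite (SUBT2 cp hp hq) exch.
have e : m -- c = m by apply: A4 => //; exact: L1.
by rewrite -(Lc cm) e L0.
Qed.

Lemma orth_sym (t g : B) : t -- g = t -> g -- t = g.
Proof.
move=> h. have : g -- (g -- t) = o by rewrite -Cm h L0.
move=> e. apply: A4; first exact: L1.
by [].
Qed.
Lemma orth_down (t g e : B) : t -- g = t -> e <: t -> e -- g = e.
Proof.
move=> h het.
have h1 : (g -- (g -- e)) <: (g -- (g -- t)) by apply: antiR; apply: antiR.
rewrite (Cm g t) h L0 A2 in h1.
rewrite Cm in h1. apply: A4; first exact: L1. by [].
Qed.

Fixpoint pw (x y : B) (k : nat) : B :=
  match k with 0 => x | S k => pw x y k -- y end.
Lemma pw_exch (x t y : B) k : pw (x -- t) y k = pw x y k -- t.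
Proof. elim: k => //= k ->. exact: exch. Qed.
Lemma pw_S' (x y : B) k : pw x y k.+1 = pw (x -- y) y k.
Proof. by rewrite pw_exch. Qed.
Lemma pw_add (x y : B) j k : pw x y (j + k) = pw (pw x y j) y k.
Proof. elim: k => [|k IH]; first by rewrite addn0. by rewrite addnS /= IH. Qed.
Lemma pw_mono (x x' y : B) k : x <: x' -> pw x y k <: pw x' y k.
Proof. move=> h; elim: k => //= k IH. exact: monoL. Qed.
Lemma pw_le (x y : B) k : pw x y k <: x.
Proof. elim: k => [|k IH] /=; first exact: L0. apply: ltr IH. exact: L1. Qed.
Lemma pw_dec (x y : B) i j : i <= j -> pw x y j <: pw x y i.
Proof. move=> h. rewrite -(subnKC h) pw_add. exact: pw_le. Qed.
Lemma pw_zero (x y : B) k : x -- y = x -> pw x y k = x.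
Proof. move=> h; elim: k => //= k ->. done. Qed.

Lemma pw_stab (x y : B) i d : pw x y i.+1 = pw x y i -> pw x y (i + d) = pw x y i.
Proof. move=> h. rewrite pw_add. apply: pw_zero. exact: h. Qed.

Lemma pw_inj (x y : B) K i j : pw x y K.+1 <> pw x y K -> i <= K.+1 -> j <= K.+1 ->
  pw x y i = pw x y j -> i = j.
Proof.
move=> hK.
suff H : forall i j, i < j -> j <= K.+1 -> pw x y i <> pw x y j.
  move=> hi hj e. case: (ltngtP i j) => // hlt.
  - by case: (H _ _ hlt hj).
  - by case: (H _ _ hlt hi).
move=> {}i {}j hij hj e.
have h1 : pw x y i.+1 = pw x y i.
  apply: A4.
  - exact: pw_dec.
  - rewrite {1}e. exact: pw_dec.
apply: hK. have hiK : i <= K by rewrite -ltnS (leq_trans hij hj).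
have e1 := pw_stab (K.+1 - i) h1. have e2 := pw_stab (K - i) h1.
rewrite subnKC in e1; last exact: (leq_trans hiK).
rewrite subnKC in e2 => //. by rewrite e1 e2.
Qed.

Definition Idl (u e : B) := exists k, pw e u k = o.
Lemma le_o (x : B) : x <: o -> x = o.
Proof. by rewrite A2. Qed.
Lemma Idl_down u w t : w <: t -> Idl u t -> Idl u w.
Proof. move=> h [k hk]. exists k. have h2 := pw_mono u k h. by rewrite hk A2 in h2. Qed.
Lemma Idl_close u w t : Idl u (w -- t) -> Idl u t -> Idl u w.
Proof.
move=> [k hk] [l hl]. exists (k + l). rewrite pw_exch in hk.
rewrite pw_add. have h2 := pw_mono u l hk. by rewrite hl A2 in h2.
Qed.
Lemma Idl0 u : Idl u o.
Proof. by exists 0. Qed.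
Definition th u (x y : B) := Idl u (x -- y) /\ Idl u (y -- x).
Lemma th_trans u x y z : th u x y -> th u y z -> th u x z.
Proof.
move=> [h1 h1'] [h2 h2']. split.
- apply: (Idl_close (t := x -- y)) => //. apply: Idl_down h2. exact: A1.
- apply: (Idl_close (t := z -- y)) => //. apply: Idl_down h1'. exact: A1.
Qed.
Lemma th_cong u : congruence (th u).
Proof.
split; first by move=> x; rewrite /th L0; split; exact: Idl0.
split; first by move=> x y [h1 h2]; split.
split; first exact: th_trans.
move=> x1 y1 x2 y2 [h1 h1'] [h2 h2']. apply: (th_trans (y := y1 -- x2)).
- split; [apply: Idl_down h1 | apply: Idl_down h1']; exact: I1.
- split; [apply: Idl_down h2' | apply: Idl_down h2]; exact: A1.
Qed.

Section SI.
Hypothesis HSI : subdirectly_irreducible B.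
Lemma monolith : exists e, e <> o /\ forall u, u <> o -> Idl u e.
Proof.
case: HSI => a [a' [ne H]].
have Hu : forall u, u <> o -> th u a a'.
  move=> u hu. apply: H; first exact: th_cong.
  exists u, o. split => //. split; last by rewrite A3; exact: Idl0.
  rewrite A2. by exists 1 => /=; rewrite L0.
case: (classic (a -- a' = o)) => h.
- exists (a' -- a). split; last by move=> u /Hu [].
  by move=> h'; apply: ne; apply: A4.
- exists (a -- a'). split => //. by move=> u /Hu [].
Qed.
Lemma KEY t g e k l : t -- g = t -> pw e t k = o -> pw e g l = o -> e = o.
Proof.
move=> htg. elim: k e => [|k IH] e //= h1 h2.
have h3 : e -- t = o.
  apply: IH; first by rewrite -pw_S'.
  have h5 := pw_mono g l (L1 e t). by rewrite h2 A2 in h5.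
have := orth_down htg h3. move=> h4. by rewrite (pw_zero _ h4) in h2.
Qed.
Lemma Zlem t g : t -- g = t -> t = o \/ g = o.
Proof.
move=> h. case: monolith => e [ne He].
case: (classic (t = o)) => ht; first by left.
case: (classic (g = o)) => hg; first by right.
case: (He t ht) => k hk. case: (He g hg) => l hl.
by case: ne; apply: (KEY h hk hl).
Qed.
Lemma chain (b p q : B) : p <: b -> q <: b -> p <: q \/ q <: p.
Proof.
move=> hp hq. have h := ORTH hp hq.
have : (p -- q) -- (q -- p) = p -- q by apply: A4 => //; exact: L1.
by case/Zlem => ->; [left|right].
Qed.

Section Chain.
Variable b : B.
Lemma max_exists (a : B) s : a <: b -> (forall d, List.In d s -> d <: b) ->
  exists m, List.In m (a :: s) /\ forall d, List.In d (a :: s) -> d <: m.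
Proof.
elim: s a => [|d s IH] a ha hs.
  exists a. split; first by left. by move=> d [<-|[]]; exact: L0.
have [m [hm1 hm2]] := IH d (hs d (or_introl erefl)) (fun d' h => hs d' (or_intror h)).
have hmb : m <: b by case: hm1 => [<-|h]; apply: hs; [left|right] => //.
case: (chain ha hmb) => h.
- exists m. split; first by right. move=> d' [<-|h'] //. exact: hm2.
- exists a. split; first by left. move=> d' [<-|h']; first exact: L0.
  apply: ltr h. exact: hm2.
Qed.
Lemma min_exists L : (forall d, List.In d L -> d <: b) ->
  (exists l, List.In l L /\ l <> o) ->
  exists y, List.In y L /\ y <> o /\ forall l, List.In l L -> l <> o -> y <: l.
Proof.
elim: L => [|l L IH] hb [l0 [hl0 nl0]]; first by case: hl0.
case: (classic (exists l', List.In l' L /\ l' <> o)) => hex.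
- have [y' [hy1 [hy2 hy3]]] := IH (fun d h => hb d (or_intror h)) hex.
  case: (classic (l = o)) => hl.
  + exists y'. split; first by right. split => //. move=> l' [<-|h] // hne.
    exact: hy3.
  + have hy'b : y' <: b by apply: hb; right.
    case: (chain (hb l (or_introl erefl)) hy'b) => h.
    * exists l. split; first by left. split => //. move=> l' [<-|h'] hne; first exact: L0.
      exact: (ltr h (hy3 _ h' hne)).
    * exists y'. split; first by right. split => //. move=> l' hin hne. case: hin => [ee|h']; [by rewrite -ee | exact: hy3].
- have hl : l <> o.
    move=> e. case: hl0 => [h|h]; first by apply: nl0; rewrite -h.
    by apply: hex; exists l0.
  exists l. split; first by left. split => //. move=> l' [<-|h] hne; first exact: L0.
  by case: hex; exists l'.
Qed.

Definition diffs (y : B) (s : list B) := forall d d', List.In d s -> List.In d' s ->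
  d' <: d -> d' <> d -> y <: d -- d'.

Lemma Glem (y : B) k : forall s, List.NoDup s -> (forall d, List.In d s -> d <: b) ->
  k < length s -> diffs y s ->
  exists x w, List.In x s /\ List.In w s /\ w <: pw x y k.
Proof.
elim: k => [|k IH] s hnd hb hlen hdf.
  case: s hnd hb hlen hdf => // d s _ _ _ _. exists d, d. split; first by left.
  split; first by left. exact: L0.
case: s hnd hb hlen hdf => // d0 s0 hnd hb hlen hdf.
have [a [ha1 ha2]] := max_exists (hb d0 (or_introl erefl)) (fun d h => hb d (or_intror h)).
have [l1 [l2 e]] := List.in_split _ _ ha1.
rewrite e in hnd hb hlen hdf ha2 ha1 *.
have hnd' := List.NoDup_remove_1 _ _ _ hnd.
have hna := List.NoDup_remove_2 _ _ _ hnd.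
have hin : forall d, List.In d (l1 ++ l2) -> List.In d (l1 ++ a :: l2).
  move=> d hd; case: (List.in_app_or _ _ _ hd) => h; apply: List.in_or_app; [left|right; right] => //.
have hlen' : k < length (l1 ++ l2).
  move: hlen. rewrite !List.length_app /= PeanoNat.Nat.add_succ_r. by rewrite ltnS.
have [x' [w [hx' [hw hwx]]]] := IH (l1 ++ l2) hnd' (fun d h => hb d (hin d h)) hlen'
   (fun d d' h1 h2 => hdf d d' (hin d h1) (hin d' h2)).
exists a, w. split; first exact: ha1. split; first exact: hin hw.
have hxa : x' <: a := ha2 x' (hin _ hx').
have hne : x' <> a by move=> ee; apply: hna; rewrite -ee.
have hy := hdf a x' ha1 (hin _ hx') hxa hne.
have h1 := antiR a hy. rewrite (Lc hxa) in h1.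
have h2 : pw x' y k <: pw a y k.+1 by rewrite pw_S'; exact: pw_mono.
exact: (ltr hwx h2).
Qed.

Variable y : B.
Hypothesis hyb : y <: b.
Definition fu (u : B) t := u -- pw u y t.
Lemma fu_le u t : fu u t <: u.
Proof. exact: L1. Qed.
Lemma Dlem u t : u <: b -> pw u y t.+1 <> o -> fu u t.+1 -- fu u t = y /\ fu u t <: fu u t.+1.
Proof.
move=> hub hne. rewrite /fu /=. set w := pw u y t.
have hwu : w <: u by exact: pw_le.
have hwb : w <: b := ltr hwu hub.
split.
- rewrite exch (Lc hwu). case: (chain hyb hwb) => h; first exact: Lc.
  by case: hne.
- apply: antiR. exact: L1.
Qed.
Lemma Flem t : forall u, u <: b -> pw u y t.+1 <> o -> fu (u -- y) t = fu u t.
Proof.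
elim: t => [|t IH] u hub hne; first by rewrite /fu /= !L0.
have hne' : pw u y t.+1 <> o.
  move=> ee; apply: hne. have -> : pw u y t.+2 = pw u y t.+1 -- y by []. by rewrite ee A3.
have e1 := IH u hub hne'.
have huy : u -- y <: b := ltr (L1 u y) hub.
have [d1 d1'] := Dlem hub hne'.
have hne2 : pw (u -- y) y t.+1 <> o by rewrite -pw_S'.
have [d2 d2'] := Dlem huy hne2.
rewrite e1 in d2 d2'.
have hP : fu (u -- y) t.+1 <: b := ltr (fu_le _ _) huy.
have hQ : fu u t.+1 <: b := ltr (fu_le _ _) hub.
case: (chain hP hQ) => h.
- apply: (CANC d2') => //. by rewrite d1 d2.
- symmetry. apply: (CANC d1') => //. by rewrite d1 d2.
Qed.
Lemma Fiter (x : B) j t : x <: b -> pw x y (j + t) <> o -> fu (pw x y j) t = fu x t.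
Proof.
move=> hxb. elim: j => [|j IH] hne //.
have hj : pw x y j <: b := ltr (pw_le x y j) hxb.
have hne1 : pw (pw x y j) y t.+1 <> o by rewrite -pw_add addnS -addSn.
have hne0 : pw x y (j + t) <> o.
  move=> ee; apply: hne. rewrite addSn.
  have -> : pw x y (j + t).+1 = pw x y (j + t) -- y by []. by rewrite ee A3.
have -> : pw x y j.+1 = pw x y j -- y by [].
rewrite (Flem hj hne1). exact: IH hne0.
Qed.
Definition mm (x : B) k := x -- pw x y k.
Lemma mclose (x : B) i j : j <= i -> pw x y i <> o -> x <: b ->
  mm x i -- mm x j = mm x (i - j).
Proof.
move=> hji hne hxb. rewrite /mm exch (Lc (pw_le x y j)).
have e : i = j + (i - j) by rewrite subnKC.
have hne' : pw x y (j + (i - j)) <> o by rewrite -e.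
rewrite {1}e pw_add. have := Fiter hxb hne'. by rewrite /fu.
Qed.
Lemma mle (x : B) i j : i <= j -> mm x i -- mm x j = o.
Proof. move=> h. apply: antiR. exact: pw_dec. Qed.
Lemma m_inj (x : B) N i j : y <> o -> pw x y N <> o -> i <= N -> j <= N ->
  mm x i = mm x j -> i = j.
Proof.
move=> hy hN hi hj e.
have e' : pw x y i = pw x y j by rewrite -(Lc (pw_le x y i)) -(Lc (pw_le x y j)) -/(mm x i) e.
suff H : forall i j, i < j -> j <= N -> pw x y i = pw x y j -> False.
  case: (ltngtP i j) => // h; [by case: (H _ _ h hj e') | by case: (H _ _ h hi (esym e'))].
move=> i' j' hij hjN ee.
have h1 : pw x y i'.+1 = pw x y i'.
  apply: A4; first exact: pw_dec. rewrite {1}ee. exact: pw_dec.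
case: (Zlem (t := pw x y i') (g := y) h1) => // h0. apply: hN.
have h2 := pw_dec x y (leq_trans (ltnW hij) hjN). by rewrite h0 A2 in h2.
Qed.
End Chain.
End SI.
End CBCK.


Fixpoint tp (k : nat) : term := match k with 0 => Var 0 | S k => TSub (tp k) (Var 1) end.
Definition E (k : nat) : identity := (tp k.+1, tp k).
Lemma eval_tp (D : alg) (v : nat -> D) k : eval v (tp k) = pw (v 0) (v 1) k.
Proof. elim: k => //= k ->. done. Qed.
Lemma sat_E (D : alg) k : sat D (E k) <-> forall x y : D, pw x y k.+1 = pw x y k.
Proof.
split.
- move=> h x y. have := h (fun i => if i is 0 then x else y). by rewrite /= !eval_tp.
- move=> h v. rewrite /= !eval_tp. exact: h.
Qed.

Lemma A_sat (T : finType) (op : T -> T -> T) (z : T) K :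
  is_cBCK (fin_alg op z) -> h_fin_alg op z <= K -> sat (fin_alg op z) (E K).
Proof.
move=> HA hK. apply/sat_E => x y. apply: NNPP => hne.
pose f := fun i : 'I_K.+2 => (pw (B := fin_alg op z) x y i : T).
have finj : injective f.
  move=> i j e. apply: val_inj. apply: (pw_inj HA hne) => //; rewrite -ltnS; exact: ltn_ord.
pose P := [pred w : T | (op z w == z) && (op w x == z)].
have sub : [seq f i | i in 'I_K.+2] \subset P.
  apply/subsetP => w /imageP [i _ ->]. rewrite /P inE /=.
  apply/andP; split; apply/eqP.
  - exact: (A3 HA).
  - exact: (pw_le HA).
have c1 := subset_leq_card sub. rewrite (card_image finj) card_ord in c1.
have c2 : h_fin op z x <= h_fin_alg op z := leq_bigmax x.
rewrite /h_fin -/P in c2.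
have : K.+1 <= #|P|.-1 by rewrite -ltnS (ltn_predK c1).
move=> c3. have := leq_trans c3 (leq_trans c2 hK). by rewrite ltnn.
Qed.

Section Luk.
Variable N : nat.
Definition Lsub (i j : 'I_N.+1) : 'I_N.+1 := inord (i - j).
Definition LC : alg := @Alg 'I_N.+1 Lsub ord0.
Lemma Lsub_val (i j : 'I_N.+1) : nat_of_ord (Lsub i j) = i - j.
Proof. rewrite /Lsub inordK //. exact: leq_ltn_trans (leq_subr j i) (ltn_ord i). Qed.
Lemma pwL (i j : LC) k : nat_of_ord (pw i j k : 'I_N.+1) = i - j * k.
Proof.
elim: k => [|k IH] /=; first by rewrite muln0 subn0.
by rewrite Lsub_val IH mulnS addnC subnDA.
Qed.
Lemma LC_sat : sat LC (E N).
Proof.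
apply/sat_E => i j. apply: ord_inj. rewrite !pwL.
case: (posnP j) => [->|hj]; first by rewrite !mul0n.
have h1 : (i <= j * N)%N.
  apply: leq_trans (ltnSE (ltn_ord i)) _. by rewrite leq_pmull.
rewrite (eqP h1). apply/eqP. rewrite subn_eq0. apply: leq_trans h1 _.
by rewrite leq_mul2l leqnSn orbT.
Qed.
End Luk.

Lemma LC_nsat n : ~ sat (LC n.+1) (E n).
Proof.
move/sat_E => h. have := h ord_max (inord 1). move/(congr1 (@nat_of_ord _)). rewrite !pwL /= inordK //.
by rewrite !mul1n subnn subSnn.
Qed.

Lemma eval_hom (D1 D2 : alg) (f : D1 -> D2) :
  (forall a b, f (sub a b) = sub (f a) (f b)) -> f (zero D1) = zero D2 ->
  forall v t, f (eval v t) = eval (fun i => f (v i)) t.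
Proof. move=> hs h0 v. elim => //= t1 IH1 t2 IH2. by rewrite hs IH1 IH2. Qed.

Lemma remove_zero (B : alg) (s : list B) : List.NoDup s ->
  exists s', List.NoDup s' /\ (forall d, List.In d s' -> List.In d s) /\
    (forall d, List.In d s' -> d <> zero B) /\ (length s <= (length s').+1)%N.
Proof.
move=> hnd. case: (classic (List.In (zero B) s)) => h.
- have [l1 [l2 e]] := List.in_split _ _ h. rewrite e in hnd *.
  exists (l1 ++ l2). split; first exact: List.NoDup_remove_1 hnd.
  have hna := List.NoDup_remove_2 _ _ _ hnd.
  split.
    move=> d hd; case: (List.in_app_or _ _ _ hd) => h'; apply: List.in_or_app; [left|right; right] => //.
  split; first by move=> d hd ee; apply: hna; rewrite -ee.
  rewrite !List.length_app /= PeanoNat.Nat.add_succ_r. done.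
- exists s. split => //. split => //. split => //. by move=> d hd ee; apply: h; rewrite -ee.
Qed.

Section Main.
Variable B : alg.
Hypothesis HB : is_cBCK B.
Hypothesis HSI : subdirectly_irreducible B.
Local Notation "x -- y" := (@Defs.sub B x y) (at level 50, left associativity).
Local Notation o := (zero B).
Local Notation "x <: y" := (x -- y = o) (at level 70).

Lemma witness (b : B) (s : list B) N : List.NoDup s ->
  (forall d, List.In d s -> d <: b) -> (N.+2 <= length s)%N -> (1 <= N)%N ->
  exists x y : B, x <: b /\ y <: b /\ y <> o /\ pw x y N <> o.
Proof.
move=> hnd hb hlen hN.
have [s' [hnd' [hin [hnz hl]]]] := remove_zero hnd.
have hb' : forall d, List.In d s' -> d <: b by move=> d /hin; exact: hb.
have hlen' : (N < length s')%N by rewrite -ltnS (leq_trans hlen hl).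
have [d1 [d2 [hd1 [hd2 hne]]]] : exists d1 d2, List.In d1 s' /\ List.In d2 s' /\ d1 <> d2.
  case: s' hnd' hlen' {hin hnz hl hb'} => [|d1 [|d2 s2]] //=; try by case: N hN hlen.
  move=> hnd' _. exists d1, d2. split; first by left. split; first by right; left.
  move=> ee. move: hnd'. rewrite ee => /List.NoDup_cons_iff [hn _]. by apply: hn; left.
pose L := List.flat_map (fun d => List.map (fun d' => d -- d') s') s'.
have hLin : forall d d', List.In d s' -> List.In d' s' -> List.In (d -- d') L.
  move=> d d' hd hd'. apply/List.in_flat_map. exists d. split => //.
  apply/List.in_map_iff. by exists d'.
have hLb : forall l, List.In l L -> l <: b.
  move=> l /List.in_flat_map [d [hd /List.in_map_iff [d' [<- _]]]].
  exact: (ltr HB (L1 HB d d') (hb' d hd)).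
have hLnz : exists l, List.In l L /\ l <> o.
  case: (chain HB HSI (hb' d1 hd1) (hb' d2 hd2)) => h.
  - exists (d2 -- d1). split; first exact: hLin.
    move=> ee. by apply: hne; apply: (A4 HB).
  - exists (d1 -- d2). split; first exact: hLin.
    move=> ee. by apply: hne; apply: (A4 HB).
have [y [hyL [hy0 hymin]]] := min_exists HB HSI hLb hLnz.
have hdf : diffs y s'.
  move=> d d' hd hd' hle hne'. apply: hymin; first exact: hLin.
  move=> ee. by apply: hne'; apply: (A4 HB).
have [x [w [hx [hw hwx]]]] := Glem HB HSI hnd' hb' hlen' hdf.
exists x, y. split; first exact: hb'. split; first exact: hLb.
split => // ee. rewrite ee (A2 HB) in hwx. exact: hnz hw hwx.
Qed.
End Main.

Theorem mainTheorem6 (T : finType) (op : T -> T -> T) (z : T)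
  (S : identity -> Prop) (B : alg) :
  is_cBCK (fin_alg op z) ->
  subdirectly_irreducible (fin_alg op z) ->
  is_cover_of_VA (fin_alg op z) S ->
  Mod S B ->
  subdirectly_irreducible B ->
  height_le B (h_fin_alg op z).+1.
Proof.
move=> HA _ [Hvar [HVS [_ Hcov]]] HSB HSI.
have HB := Hvar B HSB.
set n := h_fin_alg op z.
move=> b s hnd hs.
case: (leqP (length s) n.+2) => // hlen. exfalso.
have hb : forall d, List.In d s -> Defs.sub d b = zero B by move=> d /hs [].
have [x [y [hxb [hyb [hy0 hN]]]]] := witness HB HSI hnd hb hlen (ltn0Sn n).
pose N := n.+1.
have hBE : ~ sat B (E N).
  move/sat_E => h. have := h x y => /= e.
  case: (Zlem HB HSI (t := pw x y N) (g := y) e) => //.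
(* the Lukasiewicz subalgebra *)
pose phi := fun i : LC N => mm y x (nat_of_ord i).
have hphi_sub : forall i j : LC N, phi (Defs.sub i j) = Defs.sub (phi i) (phi j).
  move=> i j. rewrite /phi /= Lsub_val.
  case: (leqP (nat_of_ord j) (nat_of_ord i)) => h.
  - rewrite (mclose HB HSI hyb h _ hxb) //. move=> ee. apply: hN.
    have h2 := pw_dec HB x y (ltnSE (ltn_ord i)). by rewrite ee (A2 HB) in h2.
  - rewrite (mle HB y x (ltnW h)). have -> : nat_of_ord i - nat_of_ord j = 0 by apply/eqP; rewrite subn_eq0 ltnW.
    by rewrite /mm /= (L0 HB).
have hphi0 : phi (zero (LC N)) = zero B by rewrite /phi /mm /= (L0 HB).
have hphi_inj : forall i j : LC N, phi i = phi j -> i = j.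
  move=> i j e. apply: ord_inj. apply: (m_inj HB HSI hy0 hN) => //; exact: ltnSE (ltn_ord _).
have hCS : Mod S (LC N).
  move=> e he v. apply: hphi_inj. rewrite !(eval_hom hphi_sub hphi0). exact: HSB.
pose S' := fun e => S e \/ e = E N.
have h1 : class_incl (V (fin_alg op z)) (Mod S').
  move=> D hD e [he|->]; first exact: HVS.
  apply: hD. exact: (A_sat HA (leqnSn n)).
have h2 : class_incl (Mod S') (Mod S) by move=> D hD e he; apply: hD; left.
case: (Hcov S' h1 h2) => [hc|hc].
- have : Mod S' (LC N) by move=> e [he|->]; [exact: hCS | exact: LC_sat].
  move/hc => hV. apply: (@LC_nsat n). apply: hV. exact: A_sat.
- apply: hBE. apply: (proj2 (hc B) HSB). by right.
Qed.
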